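(* In the setting described in the context, there exist a feature-difference distribution $P_{\tilde{\phi}}$ and a population distribution $\mathcal{H}$ such that, for some $\theta_{\mathrm{new}}\in\operatorname{supp}(\mathcal{H})$, $\lim_{N,M\to\infty} d_{\mathrm{TV}}(\hat P_{\mathrm{new}},P_{\mathrm{new}}\mid\tilde{\phi}^q)>0$ for all $\tilde{\phi}^q$, where $d_{\mathrm{TV}}(\hat P_{\mathrm{new}},P_{\mathrm{new}}\mid\tilde{\phi}^q)$ is the total variation distance between the predicted law $\mathbb{P}(\hat z^q_{\mathrm{new}}\mid\tilde{\phi}^q)$ and the true law $\mathbb{P}(z^q_{\mathrm{new}}\mid\tilde{\phi}^q)$ on $\{+1,-1\}$.
   Context: Setting. Each human type $i$ has a reward parameter $\theta_i^*\in\mathbb{R}^d$ drawn from a distribution $\mathcal{H}$. Feature differences $\tilde{\phi}\in\mathbb{R}^d$ are drawn i.i.d. from $P_{\tilde{\phi}}$, independently of the reward parameter. Given $\tilde{\phi}$, the binary label $z\in\{+1,-1\}$ of a human with parameter $\theta$ follows the Bradley–Terry model $\mathbb{P}(z=1\mid\tilde{\phi})=\sigma(\tilde{\phi}^\top\theta)$, $\sigma(t)=(1+e^{-t})^{-1}$. Training: for a type $i$ with $\theta_i^*\sim\mathcal{H}$ one has $N$ i.i.d. demonstrations $(\tilde{\phi}_i^l,z_i^l)$ and an independent query $(\tilde{\phi}_i^q,z_i^q)$; a linear-attention transformer with matrix $U\in\mathbb{R}^{d\times d}$ predicts $\mathbb{P}(\hat z_i^q=1)=\sigma(\frac1N\sum_{l=1}^N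 z_i^l(\tilde{\phi}_i^l)^\top U\tilde{\phi}_i^q)$, and $U_N^*$ is the minimizer of the expected cross-entropy $L_N(U)=-\frac12\mathbb{E}[(1+z_i^q)\log\mathbb{P}(\hat z_i^q=1)+(1-z_i^q)\log\mathbb{P}(\hat z_i^q=-1)]$ (expectation over $\theta_i^*\sim\mathcal{H}$, features and labels). Inference on a new human with parameter $\theta_{\mathrm{new}}$: given $M$ i.i.d. samples $(\tilde{\phi}^j,z^j_{\mathrm{new}})$ from this human and a query $\tilde{\phi}^q$, the predicted law is $\mathbb{P}(\hat z^q_{\mathrm{new}}=1\mid\tilde{\phi}^q)=\sigma(\frac1M\sum_{j=1}^M z^j_{\mathrm{new}}(\tilde{\phi}^j)^\top U_N^*\tilde{\phi}^q)$, while the true law is $\mathbb{P}(z^q_{\mathrm{new}}=1\mid\tilde{\phi}^q)=\sigma((\tilde{\phi}^q)^\top\theta_{\mathrm{new}})$. The limit $N,M\to\infty$ is taken for these (random) predicted probabilities. *)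

(* Defs.v *)
From HB Require Import structures.
From mathcomp Require Import all_boot all_order all_algebra.
From mathcomp Require Import all_classical all_reals all_analysis.
Set Implicit Arguments. Unset Strict Implicit. Unset Printing Implicit Defensive.
Import Order.TTheory GRing.Theory Num.Theory.
Local Open Scope ring_scope.

Section Defs.
Variable R : realType.

Definition sigmoid (t : R) : R := 1 / (1 + expR (- t)).

Record fdist (T : Type) := FDist {
  fsz : nat;
  fpt : 'I_fsz -> T;
  fw : 'I_fsz -> R;
  fw_ge0 : forall i, 0 <= fw i;
  fw_sum1 : \sum_(i < fsz) fw i = 1 }.
Arguments fsz {T} f.
Arguments fpt {T} f i.
Arguments fw {T} f i.

Definition in_supp T (D : fdist T) (x : T) : Prop :=
  exists i : 'I_(fsz D), 0 < fw D i /\ fpt D i = x.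

Variable d : nat.

Definition dotv (u v : 'rV[R]_d) : R := (u *m v^T) 0 0.
Definition bilin (u : 'rV[R]_d) (U : 'M[R]_d) (v : 'rV[R]_d) : R :=
  (u *m U *m v^T) 0 0.

(* labels z in {+1,-1} encoded by booleans *)
Definition lab (b : bool) : R := if b then 1 else -1.

Definition bt (theta phi : 'rV[R]_d) (b : bool) : R :=
  if b then sigmoid (dotv phi theta) else 1 - sigmoid (dotv phi theta).

Variables (P : fdist 'rV[R]_d) (H : fdist 'rV[R]_d).

(* a labelled sample: index of a feature difference in the support of P,
   together with the label *)
Notation sample := ('I_(fsz P) * bool)%type.

Definition sfeat (s : sample) : 'rV[R]_d := fpt P s.1.

Definition sweight (theta : 'rV[R]_d) (s : sample) : R :=
  fw P s.1 * bt theta (sfeat s) s.2.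

Definition icl_logit n (demo : {ffun 'I_n -> sample}) (U : 'M[R]_d)
  (phiq : 'rV[R]_d) : R :=
  (n%:R)^-1 * \sum_(l < n) lab (demo l).2 * bilin (sfeat (demo l)) U phiq.

Definition L_N (N : nat) (U : 'M[R]_d) : R :=
  \sum_(h < fsz H) \sum_(demo : {ffun 'I_N -> sample}) \sum_(q : sample)
    fw H h * (\prod_(l < N) sweight (fpt H h) (demo l)) * sweight (fpt H h) q *
    (- (1/2) * ((1 + lab q.2) * ln (sigmoid (icl_logit demo U (sfeat q)))
              + (1 - lab q.2) * ln (1 - sigmoid (icl_logit demo U (sfeat q))))).

Definition is_minimizer (N : nat) (U : 'M[R]_d) : Prop :=
  forall V : 'M[R]_d, L_N N U <= L_N N V.

(* total variation distance between two laws on {+1,-1} given by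
   their probabilities p, p' of the outcome +1 *)
Definition tv2 (p p' : R) : R := (1/2) * (`|p - p'| + `|(1 - p) - (1 - p')|).

Definition dtv_new (theta_new : 'rV[R]_d) (U : 'M[R]_d) (phiq : 'rV[R]_d)
  M (smp : {ffun 'I_M -> sample}) : R :=
  tv2 (sigmoid (icl_logit smp U phiq)) (sigmoid (dotv phiq theta_new)).

Definition prob_samples (theta : 'rV[R]_d) M
  (E : {ffun 'I_M -> sample} -> bool) : R :=
  \sum_(smp : {ffun 'I_M -> sample} | E smp) \prod_(j < M) sweight theta (smp j).

End Defs.

Arguments L_N {R d} P H N U.
Arguments is_minimizer {R d} P H N U.
Arguments icl_logit {R d P n} demo U phiq.
Arguments dtv_new {R d} P theta_new U phiq {M} smp.
Arguments prob_samples {R d} P theta M E.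

(* Main.v *)
Require Import Defs.
From HB Require Import structures.
From mathcomp Require Import all_boot all_order all_algebra.
From mathcomp Require Import all_classical all_reals all_analysis.
From mathcomp Require Import ring lra.
Import Order.TTheory GRing.Theory Num.Theory.
Import numFieldNormedType.Exports.
Local Open Scope ring_scope.

Section Sig.
Variable R : realType.
Implicit Types s t x y : R.

Lemma sig_gt0 t : 0 < sigmoid t.
Proof. by rewrite /sigmoid div1r invr_gt0 addr_gt0 ?expR_gt0. Qed.

Lemma sig_lt1 t : sigmoid t < 1.
Proof.
rewrite /sigmoid div1r invf_lt1 ?addr_gt0 ?expR_gt0 //.
by rewrite ltrDl expR_gt0.
Qed.

Lemma sigN t : sigmoid (- t) = 1 - sigmoid t.
Proof.
rewrite /sigmoid opprK expRN.
have h := expR_gt0 t.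
field; rewrite !lt0r_neq0 // addr_gt0.
Qed.

Lemma sig_lt s t : s < t -> sigmoid s < sigmoid t.
Proof.
move=> st; rewrite /sigmoid !div1r ltf_pV2 ?posrE ?addr_gt0 ?expR_gt0 //.
by rewrite ltrD2l ltr_expR ltrN2.
Qed.

Lemma sig_le s t : s <= t -> sigmoid s <= sigmoid t.
Proof.
rewrite le_eqVlt => /orP[/eqP->//|/sig_lt/ltW//].
Qed.

Lemma sig0 : sigmoid 0 = 1/2 :> R.
Proof. by rewrite /sigmoid oppr0 expR0. Qed.

Definition ell t := ln (1 + expR (- t)).

Lemma ln_sig t : - ln (sigmoid t) = ell t.
Proof.
rewrite /sigmoid /ell div1r lnV ?opprK // posrE addr_gt0 ?expR_gt0 //.
Qed.

Lemma ell_ge0 t : 0 <= ell t.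
Proof. by apply: ln_ge0; rewrite lerDl expR_ge0. Qed.

Lemma ell_geN t : - t <= ell t.
Proof.
rewrite /ell -{1}(expRK (- t)) ler_ln ?posrE ?addr_gt0 ?expR_gt0 //.
by rewrite lerDr.
Qed.

Lemma expR_conv (q x : R) : 0 <= q -> q <= 1 ->
  expR (q * x) <= q * expR x + (1 - q).
Proof.
move=> q0 q1.
have := @convex_expR R (Itv01 q0 q1) x 0.
by rewrite !convRE /= mulr0 addr0 expR0 mulr1.
Qed.

Lemma ell_tangent s t : ell s + (t - s) * (sigmoid s - 1) <= ell t.
Proof.
set A := 1 + expR (- s).
have A0 : 0 < A by rewrite addr_gt0 ?expR_gt0.
set q := expR (- s) / A.
have q0 : 0 <= q by rewrite divr_ge0 ?expR_ge0 // ltW.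
have q1 : q <= 1 by rewrite ler_pdivrMr // mul1r lerDr.
have hs : sigmoid s - 1 = - q.
  by rewrite /sigmoid /q /A; field; rewrite lt0r_neq0 -/A.
have key : 1 + expR (- t) = A * (q * expR (s - t) + (1 - q)).
  rewrite /q /A expRD !expRN.
  have e0 := expR_gt0 s.
  by field; rewrite !lt0r_neq0 ?addr_gt0 ?expR_gt0.
have pos : 0 < q * expR (s - t) + (1 - q).
  have : q < 1 by rewrite ltr_pdivrMr // mul1r ltrDr ltr01.
  have : 0 <= q * expR (s - t) by rewrite mulr_ge0 ?expR_ge0.
  lra.
rewrite /ell key lnM ?posrE //.
rewrite hs lerD2l.
have -> : (t - s) * - q = q * (s - t) by ring.
rewrite -[X in X <= _]expRK ler_ln ?posrE ?expR_gt0 //; first exact: expR_conv.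
Qed.

Definition CE (b : bool) (t : R) : R :=
  - (1/2) * ((1 + lab R b) * ln (sigmoid t) + (1 - lab R b) * ln (1 - sigmoid t)).
Definition yb (b : bool) : R := if b then 1 else 0.

Lemma CE_true t : CE true t = ell t.
Proof. by rewrite /CE /lab /= -ln_sig; field. Qed.

Lemma CE_false t : CE false t = ell (- t).
Proof. by rewrite /CE /lab /= -ln_sig sigN; field. Qed.

Lemma CE_tangent b s t : CE b s + (t - s) * (sigmoid s - yb b) <= CE b t.
Proof.
case: b; rewrite /yb.
  by rewrite !CE_true; exact: ell_tangent.
rewrite !CE_false subr0.
have := ell_tangent (- s) (- t); rewrite sigN.
have -> : (- t - - s) * (1 - sigmoid s - 1) = (t - s) * sigmoid s by ring.
by [].
Qed.

Lemma sig_lip_le s t : s <= t -> sigmoid t - sigmoid s <= t - s.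
Proof.
move=> st.
set a := expR (- s); set b := expR (- t).
have a0 : 0 < a by exact: expR_gt0.
have b0 : 0 < b by exact: expR_gt0.
have e : sigmoid t - sigmoid s = (a - b) / ((1 + a) * (1 + b)).
  rewrite /sigmoid -/a -/b; field.
  by rewrite !lt0r_neq0 ?addr_gt0.
have hb : b = a * expR (s - t) by rewrite /a /b -expRD; congr expR; ring.
have h1 : a - b <= a * (t - s).
  rewrite hb; have := expR_ge1Dx (s - t).
  move=> h; have : a * (1 + (s - t)) <= a * expR (s - t) by rewrite ler_pM2l.
  lra.
rewrite e ler_pdivrMr ?mulr_gt0 ?addr_gt0 //.
apply: (le_trans h1).
have ts : 0 <= t - s by rewrite subr_ge0.
have : a <= (1 + a) * (1 + b) by nra.
move=> h; rewrite mulrC; apply: ler_wpM2l => //; nra.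
Qed.

Lemma sig_lip s t : `|sigmoid s - sigmoid t| <= `|s - t|.
Proof.
wlog st : s t / s <= t.
  move=> W; have [/W//|/ltW ts] := leP s t.
  by rewrite distrC [`|s - t|]distrC; apply: W.
rewrite distrC [`|s - t|]distrC.
rewrite ger0_norm; last by rewrite subr_ge0 sig_le.
by rewrite ger0_norm ?subr_ge0 //; apply: sig_lip_le.
Qed.

Lemma ell_cont : continuous (fun t : R => ell t).
Proof.
move=> x.
change ({for x, continuous ((@ln R) \o (fun t => 1 + expR (- t)))}).
apply: continuous_comp.
  apply: continuousD; first exact: cst_continuous.
  apply: (@continuous_comp R R R (fun t => - t) expR).
    exact: opp_continuous.
  exact: continuous_expR.
by apply: continuous_ln; rewrite addr_gt0 ?expR_gt0.
Qed.

Lemma CE_cont b (z : R) : continuous (fun u => CE b (z * u)).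
Proof.
move=> x; case: b.
  have -> : (fun u => CE true (z * u)) = ell \o ( *%R z).
    by apply/funext => u; rewrite CE_true.
  apply: continuous_comp; last exact: ell_cont.
  exact: mulrl_continuous.
have -> : (fun u => CE false (z * u)) = ell \o (fun u => - (z * u)).
  by apply/funext => u; rewrite CE_false.
apply: continuous_comp; last exact: ell_cont.
apply: (@continuous_comp R R R (fun u => z * u) (fun t => - t)).
  exact: mulrl_continuous.
exact: opp_continuous.
Qed.
End Sig.

Section Prob.
Variable R : realType.
Variable S : finType.
Variable pi : S -> R.

Lemma factorP N (h : 'I_N -> S -> R) :
  \sum_(f : {ffun 'I_N -> S}) (\prod_l pi (f l)) * \prod_l h l (f l) =
  \prod_l \sum_s pi s * h l s.
Proof.
rewrite bigA_distr_bigA; apply: eq_bigr => f _.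
by rewrite -big_split.
Qed.

Hypothesis pi1 : \sum_s pi s = 1.

Lemma psum1 N : \sum_(f : {ffun 'I_N -> S}) \prod_l pi (f l) = 1.
Proof.
have /= := factorP N (fun _ _ => 1).
under eq_bigr do rewrite big1_eq mulr1.
move=> ->; apply: big1 => l _; under eq_bigr do rewrite mulr1; exact: pi1.
Qed.

Lemma prod_pick N (i : 'I_N) (a : S -> R) (f : 'I_N -> S) :
  \prod_l (if l == i then a (f l) else 1) = a (f i).
Proof.
by rewrite (bigD1 i) //= eqxx big1 ?mulr1 // => l /negbTE ->.
Qed.

Lemma E1 N (i : 'I_N) (x : S -> R) :
  \sum_(f : {ffun 'I_N -> S}) (\prod_l pi (f l)) * x (f i) = \sum_s pi s * x s.
Proof.
have /= := factorP N (fun l s => if l == i then x s else 1).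
under eq_bigr do rewrite prod_pick.
move=> ->; rewrite (bigD1 i) //= [X in _ * X]big1 ?mulr1; last first.
  move=> l /negbTE li; under eq_bigr do rewrite li mulr1; exact: pi1.
by under eq_bigr do rewrite eqxx.
Qed.

Lemma E2 N (i j : 'I_N) (y : S -> R) : i != j ->
  \sum_(f : {ffun 'I_N -> S}) (\prod_l pi (f l)) * (y (f i) * y (f j)) =
  (\sum_s pi s * y s) * (\sum_s pi s * y s).
Proof.
move=> ij.
have /= := factorP N (fun l s => (if l == i then y s else 1) * (if l == j then y s else 1)).
under eq_bigr do rewrite big_split /= !prod_pick.
move=> ->; rewrite (bigD1 i) //= (bigD1 j) /=; last by rewrite eq_sym.
rewrite [X in _ * (_ * X)]big1 ?mulr1; last first.
  move=> l /andP[lj li]; rewrite (negbTE li) (negbTE lj).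
  under eq_bigr do rewrite !mulr1; exact: pi1.
rewrite eqxx (negbTE ij) eq_sym (negbTE ij).
rewrite eqxx; by congr (_ * _); apply: eq_bigr => s _; rewrite ?mulr1 ?mul1r.
Qed.

Lemma varP N (x : S -> R) (m : R) : (0 < N)%N ->
  \sum_s pi s * x s = m ->
  \sum_(f : {ffun 'I_N -> S}) (\prod_l pi (f l)) *
     ((N%:R)^-1 * \sum_l x (f l) - m) ^+ 2 =
  (N%:R)^-1 * \sum_s pi s * (x s - m) ^+ 2.
Proof.
move=> N0 hm.
have N0' : (N%:R : R) != 0 by rewrite pnatr_eq0 -lt0n.
set y := fun s => x s - m.
have Ey : \sum_s pi s * y s = 0.
  rewrite /y; under eq_bigr do rewrite mulrBr.
  by rewrite sumrB hm -big_distrl /= pi1 mul1r subrr.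
have e1 : forall f : {ffun 'I_N -> S},
    (N%:R)^-1 * \sum_l x (f l) - m = (N%:R)^-1 * \sum_l y (f l).
  move=> f; rewrite /y sumrB sumr_const card_ord mulrBr.
  by rewrite -[m *+ N]mulr_natl mulrA mulVf // mul1r.
have e2 : forall f : {ffun 'I_N -> S},
    ((N%:R)^-1 * \sum_l x (f l) - m) ^+ 2 =
    \sum_i \sum_j ((N%:R)^-1 * (N%:R)^-1) * (y (f i) * y (f j)).
  move=> f; rewrite e1 exprMn !expr2 mulr_suml mulr_sumr.
  apply: eq_bigr => i _; rewrite mulr_sumr mulr_sumr.
  by apply: eq_bigr => j _; ring.
have e3 : forall f : {ffun 'I_N -> S},
    (\prod_l pi (f l)) * ((N%:R)^-1 * \sum_l x (f l) - m) ^+ 2 =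
    \sum_i \sum_j (\prod_l pi (f l)) * ((N%:R)^-1 * (N%:R)^-1) * (y (f i) * y (f j)).
  move=> f; rewrite e2 mulr_sumr; apply: eq_bigr => i _.
  by rewrite mulr_sumr; apply: eq_bigr => j _; exact: mulrA.
rewrite (eq_bigr _ (fun f _ => e3 f)).
rewrite exchange_big /=.
under eq_bigr do rewrite exchange_big /=.
have inner : forall i : 'I_N,
    \sum_j \sum_(f : {ffun 'I_N -> S})
      (\prod_l pi (f l)) * ((N%:R)^-1 * (N%:R)^-1) * (y (f i) * y (f j)) =
    (N%:R)^-1 * (N%:R)^-1 * \sum_s pi s * (x s - m) ^+ 2.
  move=> i; rewrite (bigD1 i) //= [X in _ + X]big1 ?addr0; last first.
    move=> j ji.
    rewrite (eq_bigr (fun f : {ffun 'I_N -> S} => ((N%:R)^-1 * (N%:R)^-1) *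
       ((\prod_l pi (f l)) * (y (f i) * y (f j))))); last by move=> f _; ring.
    by rewrite -big_distrr /= (E2 N i j) ?Ey ?mul0r ?mulr0 // eq_sym.
  rewrite (eq_bigr (fun f : {ffun 'I_N -> S} => ((N%:R)^-1 * (N%:R)^-1) *
       ((\prod_l pi (f l)) * ((fun s => y s * y s) (f i))))); last by move=> f _; ring.
  rewrite -big_distrr (E1 N i (fun s => y s * y s)); congr (_ * _).
under eq_bigr do rewrite inner.
rewrite sumr_const card_ord -mulr_natl.
by field.
Qed.


Hypothesis pi0 : forall s, 0 <= pi s.

Lemma prod_ge0 N (f : {ffun 'I_N -> S}) : 0 <= \prod_l pi (f l).
Proof. by apply: prodr_ge0 => l _. Qed.

Lemma abs_le_sq (z eta : R) : 0 < eta -> `|z| <= eta + z ^+ 2 / eta.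
Proof.
move=> e0.
have h : z ^+ 2 = `|z| ^+ 2 by rewrite real_normK ?num_real.
rewrite h; have := normr_ge0 z; set a := `|z|.
move=> a0; rewrite -(@ler_pM2r _ eta) // mulrDl mulfVK ?gt_eqF //.
nra.
Qed.

Lemma Elip N (x : S -> R) (m : R) (g : R -> R) (L eta : R) :
  (0 < N)%N -> \sum_s pi s * x s = m ->
  \sum_s pi s * (x s - m) ^+ 2 <= 1 -> 0 <= L -> 0 < eta ->
  (forall z, `|g z - g m| <= L * `|z - m|) ->
  `|\sum_(f : {ffun 'I_N -> S}) (\prod_l pi (f l)) *
       g ((N%:R)^-1 * \sum_l x (f l)) - g m| <= L * (eta + (N%:R)^-1 / eta).
Proof.
move=> N0 hm hv L0 e0 hg.
have -> : g m = \sum_(f : {ffun 'I_N -> S}) (\prod_l pi (f l)) * g m.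
  by rewrite -big_distrl /= psum1 mul1r.
rewrite -sumrB.
apply: (le_trans (ler_norm_sum _ _ _)).
apply: (@le_trans _ _ (\sum_(f : {ffun 'I_N -> S}) (\prod_l pi (f l)) *
   (L * (eta + ((N%:R)^-1 * \sum_l x (f l) - m) ^+ 2 / eta)))).
  apply: ler_sum => f _; rewrite -mulrBr normrM ger0_norm ?prod_ge0 //.
  apply: ler_wpM2l; first exact: prod_ge0.
  apply: (le_trans (hg _)); apply: ler_wpM2l => //; exact: abs_le_sq.
under eq_bigr do rewrite mulrCA mulrDr mulrDr.
rewrite big_split /= -!big_distrr /= -mulrDr ler_wpM2l //.
rewrite -big_distrl /= psum1 mul1r lerD2l.
under eq_bigr do rewrite mulrA.
rewrite -big_distrl /= varP //.
rewrite ler_wpM2r ?invr_ge0 ?(ltW e0) //.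
by rewrite -[X in _ <= X]mulr1 ler_wpM2l ?invr_ge0 ?ler0n.
Qed.

Lemma markovP N (E : pred {ffun 'I_N -> S}) (Q : {ffun 'I_N -> S} -> R) (eta : R) :
  0 < eta -> (forall f, 0 <= Q f) -> (forall f, E f -> eta <= Q f) ->
  \sum_(f | E f) \prod_l pi (f l) <= eta^-1 * \sum_(f : {ffun 'I_N -> S}) (\prod_l pi (f l)) * Q f.
Proof.
move=> e0 Q0 EQ.
rewrite big_distrr /= big_mkcond /=; apply: ler_sum => f _.
case: ifP => Ef; last by rewrite mulr_ge0 ?invr_ge0 ?(ltW e0) // mulr_ge0 ?prod_ge0.
rewrite mulrCA -[X in X <= _]mulr1 ler_wpM2l ?prod_ge0 //.
by rewrite ler_pdivlMl // mulr1 EQ.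
Qed.

End Prob.

Section Model.
Variable R : realType.
Variable d : nat.
Hypothesis hd : (0 < d)%N.

Definition i0 : 'I_d := Ordinal hd.
Definition phi : 'rV[R]_d := delta_mx 0 i0.

Lemma bilin_phi U : bilin phi U phi = U i0 i0.
Proof.
by rewrite /bilin /phi -rowE trmx_delta -colE !mxE.
Qed.

Lemma dotv_phi th : dotv phi th = th 0 i0.
Proof. by rewrite /dotv /phi -rowE !mxE. Qed.

Definition theta (t : R) : 'rV[R]_d := t *: phi.

Lemma dotv_theta t : dotv phi (theta t) = t.
Proof. by rewrite dotv_phi /theta !mxE eqxx /= mulr1. Qed.

Lemma P0_ge0 (i : 'I_1) : 0 <= (fun _ => 1 : R) i.
Proof. by []. Qed.
Lemma P0_sum : \sum_(i < 1) (fun _ => 1 : R) i = 1.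
Proof. by rewrite big_ord1. Qed.

Definition P0 : fdist R 'rV[R]_d := FDist (fun _ : 'I_1 => phi) P0_ge0 P0_sum.

Definition sampleT := ('I_1 * bool)%type.

Lemma sum_sample (F : sampleT -> R) : \sum_s F s = F (ord0, true) + F (ord0, false).
Proof.
rewrite (eq_bigr (fun p => F (p.1, p.2))); last by case.
by rewrite -(pair_bigA _ (fun i b => F (i, b))) /= big_ord1 big_bool.
Qed.

Definition pis (t : R) : sampleT -> R := fun s => @sweight R d P0 (theta t) s.

Lemma pis_eq t s : pis t s = if s.2 then sigmoid t else 1 - sigmoid t.
Proof.
by rewrite /pis /sweight /= mul1r /bt /sfeat /= dotv_theta.
Qed.

Lemma pis_ge0 t s : 0 <= pis t s.
Proof.
rewrite pis_eq; case: s.2; first exact: ltW (sig_gt0 _ _).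
by rewrite subr_ge0 ltW // sig_lt1.
Qed.

Lemma pis_sum t : \sum_s pis t s = 1.
Proof. by rewrite sum_sample !pis_eq /=; ring. Qed.

Definition mt (t : R) : R := 2 * sigmoid t - 1.

Lemma pis_mean t : \sum_s pis t s * lab R s.2 = mt t.
Proof. by rewrite sum_sample !pis_eq /= /mt; ring. Qed.

Lemma pis_var t : \sum_s pis t s * (lab R s.2 - mt t) ^+ 2 <= 1.
Proof.
rewrite sum_sample !pis_eq /= /mt.
set p := sigmoid t.
have -> : p * (1 - (2 * p - 1)) ^+ 2 + (1 - p) * (-1 - (2 * p - 1)) ^+ 2 =
  1 - (2 * p - 1) ^+ 2 by ring.
by rewrite lerBlDr lerDl sqr_ge0.
Qed.

Lemma mt_abs t : `|mt t| <= 1.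
Proof.
rewrite /mt; have := sig_gt0 R t; have := sig_lt1 R t => h1 h2.
by rewrite ler_norml; apply/andP; split; lra.
Qed.


Definition ttype (h : 'I_2) : R := if h == ord0 then 1 else 3.

Lemma expR1_gt2 : 2 < expR (1 : R).
Proof. by have := @expR_gt1Dx R 1 (oner_neq0 _); rewrite -[2]/(1 + 1)%R. Qed.

Lemma mt1_gt : 1 < 3 * mt 1.
Proof.
rewrite /mt /sigmoid expRN.
have := expR1_gt2; set e := expR 1 => he.
have e0 : 0 < e by lra.
have -> : 1 / (1 + e^-1) = e / (e + 1) by field; rewrite !lt0r_neq0 ?addr_gt0.
rewrite -subr_gt0.
have -> : 3 * (2 * (e / (e + 1)) - 1) - 1 = (4 * e - 4 - 2 * e) / (e + 1).
  by field; rewrite lt0r_neq0 ?addr_gt0.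
apply: divr_gt0; lra.
Qed.

Lemma mt_gt0 t : 0 < t -> 0 < mt t.
Proof.
move=> t0; have := sig_lt R _ _ t0; rewrite sig0 /mt => h; lra.
Qed.

Lemma mt_lt1 t : mt t < 1.
Proof. have := sig_lt1 R t; rewrite /mt => h; lra. Qed.

Definition gfun (t u z : R) : R := z * (sigmoid (z * u) - sigmoid t).

Definition gA := gfun 1 3 (mt 1).
Definition gB := gfun 3 3 (mt 3).

Lemma gA_gt0 : 0 < gA.
Proof.
rewrite /gA /gfun mulr_gt0 ?mt_gt0 // subr_gt0 (sig_lt R) // mulrC.
exact: mt1_gt.
Qed.

Lemma gB_lt0 : gB < 0.
Proof.
rewrite /gB /gfun pmulr_rlt0 ?mt_gt0 // subr_lt0 (sig_lt R) //.
by rewrite gtr_pMl ?mt_lt1.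
Qed.

Definition w (h : 'I_2) : R := if h == ord0 then - gB / (gA - gB) else gA / (gA - gB).

Lemma w_ge0 h : 0 <= w h.
Proof.
have := gA_gt0; have := gB_lt0 => hb ha.
rewrite /w; case: (h == ord0); apply: divr_ge0; lra.
Qed.

Lemma sum2 (F : 'I_2 -> R) : \sum_h F h = F ord0 + F ord_max.
Proof. by rewrite big_ord_recr big_ord1; congr (F _ + _); apply: val_inj. Qed.

Lemma w_sum : \sum_h w h = 1.
Proof.
have := gA_gt0; have := gB_lt0 => hb ha.
rewrite sum2 /w /=; field; apply/eqP => h; lra.
Qed.

Definition H0 : fdist R 'rV[R]_d := FDist (fun h : 'I_2 => theta (ttype h)) w_ge0 w_sum.

Definition zb N (demo : {ffun 'I_N -> sampleT}) : R :=
  (N%:R)^-1 * \sum_l lab R (demo l).2.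

Arguments zb {N} demo.

Lemma icl_eq N (demo : {ffun 'I_N -> sampleT}) U :
  @icl_logit R d P0 N demo U phi = zb demo * U i0 i0.
Proof.
rewrite /icl_logit /zb -mulrA mulr_suml; congr (_ * _).
by apply: eq_bigr => l _; rewrite /sfeat /= bilin_phi.
Qed.

Definition Lf N (u : R) : R :=
  \sum_h \sum_(demo : {ffun 'I_N -> sampleT}) \sum_(q : sampleT)
    w h * (\prod_l pis (ttype h) (demo l)) * pis (ttype h) q * CE R q.2 (zb demo * u).

Lemma L_eq N U : L_N P0 H0 N U = Lf N (U i0 i0).
Proof.
apply: eq_bigr => h _; apply: eq_bigr => demo _; apply: eq_bigr => q _.
by rewrite /CE -icl_eq.
Qed.

Definition Dn N (u : R) : R :=
  \sum_h \sum_(demo : {ffun 'I_N -> sampleT}) \sum_(q : sampleT)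
    w h * (\prod_l pis (ttype h) (demo l)) * pis (ttype h) q *
      (zb demo * (sigmoid (zb demo * u) - yb R q.2)).

Lemma weight_ge0 N h (demo : {ffun 'I_N -> sampleT}) q :
  0 <= w h * (\prod_l pis (ttype h) (demo l)) * pis (ttype h) q.
Proof.
apply: mulr_ge0; last exact: pis_ge0.
apply: mulr_ge0; first exact: w_ge0.
by apply: prodr_ge0 => l _; exact: pis_ge0.
Qed.

Lemma L_tangent N u v : Lf N u + (v - u) * Dn N u <= Lf N v.
Proof.
rewrite /Lf /Dn mulr_sumr -big_split /=; apply: ler_sum => h _.
rewrite mulr_sumr -big_split /=; apply: ler_sum => demo _.
rewrite mulr_sumr -big_split /=; apply: ler_sum => q _.
set W := w h * _ * _.
have W0 : 0 <= W by exact: weight_ge0.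
rewrite [(v - u) * _]mulrCA -mulrDr ler_wpM2l //.
have -> : (v - u) * (zb demo * (sigmoid (zb demo * u) - yb R q.2)) =
  (zb demo * v - zb demo * u) * (sigmoid (zb demo * u) - yb R q.2) by ring.
exact: CE_tangent.
Qed.


Lemma nat_big (x : R) : exists K : nat, forall N : nat, (K <= N)%N -> x < N%:R.
Proof.
have := truncnS_gt x; set K := (X in X%:R) => hK.
exists K => N KN; apply: (lt_le_trans hK); by rewrite ler_nat.
Qed.

Lemma Dn_eq N u : Dn N u = \sum_h w h *
  \sum_(demo : {ffun 'I_N -> sampleT}) (\prod_l pis (ttype h) (demo l)) * gfun (ttype h) u (zb demo).
Proof.
apply: eq_bigr => h _; rewrite big_distrr; apply: eq_bigr => demo _ /=.
by rewrite sum_sample !pis_eq /= /gfun /yb; ring.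
Qed.

Definition Dinf u := \sum_h w h * gfun (ttype h) u (mt (ttype h)).

Lemma gfun_lip t u z m : `|m| <= 1 ->
  `|gfun t u z - gfun t u m| <= (1 + `|u|) * `|z - m|.
Proof.
move=> m1.
have -> : gfun t u z - gfun t u m =
  (z - m) * (sigmoid (z * u) - sigmoid t) + m * (sigmoid (z * u) - sigmoid (m * u)).
  by rewrite /gfun; ring.
apply: (le_trans (ler_normD _ _)); rewrite !normrM mulrDl mul1r.
apply: lerD.
  rewrite -[X in _ <= X]mulr1 ler_wpM2l //.
  have := sig_gt0 R (z * u); have := sig_lt1 R (z * u).
  have := sig_gt0 R t; have := sig_lt1 R t => h1 h2 h3 h4.
  by rewrite ler_norml; apply/andP; split; lra.
apply: (le_trans (ler_wpM2r (normr_ge0 _) m1)); rewrite mul1r.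
apply: (le_trans (sig_lip _ _ _)).
by rewrite -mulrBl normrM mulrC.
Qed.

Lemma Dconv u dl : 0 < dl -> exists K : nat, forall N : nat, (K <= N)%N ->
  `|Dn N u - Dinf u| <= dl.
Proof.
move=> dl0.
set L := 1 + `|u|.
have L0 : 0 < L by rewrite /L ltr_pwDl.
set eta := dl / (2 * L).
have eta0 : 0 < eta by rewrite divr_gt0 ?mulr_gt0.
have [K HK] := nat_big (4 * L ^+ 2 / dl ^+ 2).
exists K => N KN.
have hN := HK N KN.
have N0 : (0 < N)%N.
  rewrite lt0n; apply/negP => /eqP N0; move: hN; rewrite N0.
  apply/negP; rewrite -leNgt; apply: divr_ge0; [apply: mulr_ge0 => //; exact: sqr_ge0| exact: sqr_ge0].
have hN0 : (0 : R) < N%:R by rewrite ltr0n.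
have bound : L * (eta + (N%:R)^-1 / eta) <= dl.
  rewrite /eta.
  have -> : L * (dl / (2 * L) + (N%:R)^-1 / (dl / (2 * L))) =
    dl / 2 + 2 * L ^+ 2 / (N%:R * dl).
    by field; rewrite !gt_eqF.
  suff : 2 * L ^+ 2 / (N%:R * dl) <= dl / 2 by lra.
  rewrite ler_pdivrMr ?mulr_gt0 //.
  move: hN; rewrite ltr_pdivrMr ?exprn_gt0 // => hN.
  have -> : dl / 2 * (N%:R * dl) = (N%:R * dl ^+ 2) / 2 by rewrite expr2; field.
  lra.
rewrite Dn_eq /Dinf -sumrB.
apply: (le_trans (ler_norm_sum _ _ _)).
apply: (@le_trans _ _ (\sum_h w h * (L * (eta + (N%:R)^-1 / eta)))).
  apply: ler_sum => h _; rewrite -mulrBr normrM ger0_norm ?w_ge0 //.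
  apply: ler_wpM2l; first exact: w_ge0.
  apply: (@Elip R sampleT (pis (ttype h)) (pis_sum _) (pis_ge0 _) N (fun s => lab R s.2)) => //.
  - exact: pis_mean.
  - exact: pis_var.
  - exact: ltW.
  - by move=> z; apply: gfun_lip; exact: mt_abs.
by rewrite -big_distrl /= w_sum mul1r.
Qed.


Lemma w_gt0 h : 0 < w h.
Proof.
have := gA_gt0; have := gB_lt0 => hb ha.
rewrite /w; case: (h == ord0); apply: divr_gt0; lra.
Qed.

Lemma Dinf_eq v : Dinf v = w ord0 * gfun 1 v (mt 1) + w ord_max * gfun 3 v (mt 3).
Proof. by rewrite /Dinf sum2. Qed.

Lemma Dinf0 : Dinf 3 = 0.
Proof.
rewrite Dinf_eq -/gA -/gB /w /=.
have := gA_gt0; have := gB_lt0 => hb ha.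
by field; apply/eqP => h; lra.
Qed.

Lemma Dinf_diff v : Dinf v = w ord0 * (mt 1 * (sigmoid (mt 1 * v) - sigmoid (mt 1 * 3)))
   + w ord_max * (mt 3 * (sigmoid (mt 3 * v) - sigmoid (mt 3 * 3))).
Proof.
rewrite -[LHS]subr0 -[X in _ - X]Dinf0 !Dinf_eq /gfun; ring.
Qed.

Lemma Dinf_pos v : 3 < v -> 0 < Dinf v.
Proof.
move=> v3; rewrite Dinf_diff.
have m1 : 0 < mt 1 by apply: mt_gt0; exact: ltr01.
have m3 : 0 < mt 3 by apply: mt_gt0.
apply: addr_gt0; apply: mulr_gt0; rewrite ?w_gt0 //; apply: mulr_gt0 => //;
  rewrite subr_gt0; apply: sig_lt; rewrite ltr_pM2l //.
Qed.

Lemma Dinf_neg v : v < 3 -> Dinf v < 0.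
Proof.
move=> v3; rewrite Dinf_diff.
have m1 : 0 < mt 1 by apply: mt_gt0; exact: ltr01.
have m3 : 0 < mt 3 by apply: mt_gt0.
have h1 : sigmoid (mt 1 * v) < sigmoid (mt 1 * 3) by apply: sig_lt; rewrite ltr_pM2l.
have h3 : sigmoid (mt 3 * v) < sigmoid (mt 3 * 3) by apply: sig_lt; rewrite ltr_pM2l.
have := w_gt0 ord0; have := w_gt0 ord_max => wa wb.
have e1 : w ord0 * (mt 1 * (sigmoid (mt 1 * v) - sigmoid (mt 1 * 3))) < 0.
  by rewrite pmulr_rlt0 // pmulr_rlt0 // subr_lt0.
have e3 : w ord_max * (mt 3 * (sigmoid (mt 3 * v) - sigmoid (mt 3 * 3))) < 0.
  by rewrite pmulr_rlt0 // pmulr_rlt0 // subr_lt0.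
lra.
Qed.


Lemma cont_sum (I : finType) (F : I -> R -> R) :
  (forall i, continuous (F i)) -> continuous (fun u => \sum_i F i u).
Proof.
move=> h; apply: continuous_big => //; exact: add_continuous.
Qed.

Lemma Lf_cont N : continuous (Lf N).
Proof.
apply: cont_sum => h; apply: cont_sum => demo; apply: cont_sum => q.
move=> x; apply: (continuous_comp (CE_cont R q.2 (zb demo) x)).
exact: mulrl_continuous.
Qed.

Lemma CE_ge0 b t : 0 <= CE R b t.
Proof. by case: b; rewrite ?CE_true ?CE_false ell_ge0. Qed.

Lemma CE0 b : CE R b 0 = ln 2.
Proof.
by case: b; rewrite ?CE_true ?CE_false ?oppr0 /ell oppr0 expR0.
Qed.

Lemma Lf0 N : Lf N 0 = ln 2.
Proof.
rewrite /Lf.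
transitivity (\sum_h \sum_(demo : {ffun 'I_N -> sampleT}) \sum_(q : sampleT)
    w h * (\prod_l pis (ttype h) (demo l)) * pis (ttype h) q * ln 2).
  apply: eq_bigr => h _; apply: eq_bigr => demo _; apply: eq_bigr => q _.
  by rewrite mulr0 CE0.
transitivity (\sum_h \sum_(demo : {ffun 'I_N -> sampleT})
    w h * (\prod_l pis (ttype h) (demo l)) * ln (2 : R)).
  apply: eq_bigr => h _; apply: eq_bigr => demo _.
  by rewrite -big_distrl /= -big_distrr /= pis_sum mulr1.
transitivity (\sum_h w h * ln (2 : R)).
  apply: eq_bigr => h _.
  by rewrite -big_distrl /= -big_distrr /= psum1 ?mulr1 //; exact: pis_sum.
by rewrite -big_distrl /= w_sum mul1r.
Qed.

Definition dall N : {ffun 'I_N -> sampleT} := [ffun _ => (ord0, true)].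

Lemma zb_dall N : (0 < N)%N -> zb (dall N) = 1.
Proof.
move=> N0; rewrite /zb (eq_bigr (fun _ => 1)); last by move=> l _; rewrite ffunE.
by rewrite sumr_const card_ord -[1 *+ N]mulr_natl mulr1 mulVf // pnatr_eq0 -lt0n.
Qed.

Definition cN N := w ord0 * sigmoid 1 ^+ N * (sigmoid 1 * (1 - sigmoid 1)).

Lemma cN_gt0 N : 0 < cN N.
Proof.
rewrite /cN; apply: mulr_gt0; [apply: mulr_gt0; [exact: w_gt0| apply: exprn_gt0; exact: sig_gt0]|]. apply: mulr_gt0; first exact: sig_gt0. by rewrite subr_gt0 sig_lt1.
Qed.

Lemma sum_ge_term (I : finType) (F : I -> R) i :
  (forall j, 0 <= F j) -> F i <= \sum_j F j.
Proof.
move=> h; rewrite (bigD1 i) //= lerDl; apply: sumr_ge0 => j _; exact: h.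
Qed.

Lemma Lf_lower N u : (0 < N)%N -> cN N * `|u| <= Lf N u.
Proof.
move=> N0.
have T0 : forall h (demo : {ffun 'I_N -> sampleT}) q,
  0 <= w h * (\prod_l pis (ttype h) (demo l)) * pis (ttype h) q * CE R q.2 (zb demo * u).
  by move=> h demo q; rewrite mulr_ge0 ?weight_ge0 ?CE_ge0.
rewrite /Lf.
apply: le_trans; last first.
  apply: (@sum_ge_term _ (fun h => \sum_(demo : {ffun 'I_N -> sampleT}) \sum_(q : sampleT) w h * (\prod_l pis (ttype h) (demo l)) * pis (ttype h) q * CE R q.2 (zb demo * u)) ord0).
  by move=> h; apply: sumr_ge0 => demo _; apply: sumr_ge0 => q _; exact: T0.
apply: le_trans; last first.
  apply: (@sum_ge_term _ (fun demo : {ffun 'I_N -> sampleT} => \sum_(q : sampleT) w ord0 * (\prod_l pis (ttype ord0) (demo l)) * pis (ttype ord0) q * CE R q.2 (zb demo * u)) (dall N)).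
  by move=> demo; apply: sumr_ge0 => q _; exact: T0.
rewrite sum_sample /= zb_dall // mul1r CE_true CE_false.
have hp : \prod_l pis (ttype ord0) (dall N l) = sigmoid 1 ^+ N.
  rewrite (eq_bigr (fun _ => sigmoid 1)); last by move=> l _; rewrite ffunE pis_eq.
  by rewrite prodr_const card_ord.
rewrite hp !pis_eq /=.
have := sig_gt0 R 1; have := sig_lt1 R 1; set p := sigmoid 1 => p1 p0.
have w0 := w_gt0 ord0.
set a := w ord0 * p ^+ N.
have a0 : 0 < a by rewrite mulr_gt0 ?exprn_gt0.
have e1 := ell_geN R u; have e2 := ell_geN R (- u).
have e3 := ell_ge0 R u; have e4 := ell_ge0 R (- u).
rewrite opprK in e2.
rewrite /cN -/p -/a.
have q0 : 0 <= 1 - p by lra.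
have pa : 0 <= a * p by rewrite mulr_ge0 // ltW.
have qa : 0 <= a * (1 - p) by rewrite mulr_ge0 // ltW.
have pq1 : p * (1 - p) <= 1 - p by rewrite ler_piMl // ltW.
have pq2 : p * (1 - p) <= p by rewrite ler_piMr ?ltW //; lra.
have [u0|u0] := leP 0 u.
  rewrite ger0_norm //.
  have h1 : a * (1 - p) * u <= a * (1 - p) * ell R (- u) by apply: ler_wpM2l.
  have h2 : 0 <= a * p * ell R u by apply: mulr_ge0.
  have h3 : a * (p * (1 - p)) * u <= a * (1 - p) * u.
    by apply: ler_wpM2r => //; apply: ler_wpM2l => //; exact: ltW.
  lra.
rewrite ltr0_norm //.
have u0' : 0 <= - u by lra.
have h1 : a * p * (- u) <= a * p * ell R u by apply: ler_wpM2l.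
have h2 : 0 <= a * (1 - p) * ell R (- u) by apply: mulr_ge0.
have h3 : a * (p * (1 - p)) * (- u) <= a * p * (- u).
  by apply: ler_wpM2r => //; apply: ler_wpM2l => //; exact: ltW.
lra.
Qed.


Lemma Lf_const0 u : Lf 0 u = Lf 0 0.
Proof.
apply: eq_bigr => h _; apply: eq_bigr => demo _; apply: eq_bigr => q _.
by rewrite /zb !big_ord0 !mulr0 !mul0r.
Qed.

Lemma ln2_le1 : ln (2 : R) <= 1.
Proof. by rewrite -ler_expR lnK ?posrE // ltW // expR1_gt2. Qed.

Lemma exists_min N : exists U : 'M[R]_d, is_minimizer P0 H0 N U.
Proof.
case: N => [|N].
  by exists 0 => V; rewrite !L_eq Lf_const0 [Lf 0 (V _ _)]Lf_const0.
set c := cN N.+1.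
have c0 : 0 < c by exact: cN_gt0.
set Rb := 2 / c.
have Rb0 : 0 < Rb by rewrite divr_gt0.
have hab : - Rb <= Rb by lra.
have [um umI ummin] := @EVT_min R (Lf N.+1) (- Rb) Rb hab
   (continuous_subspaceT (Lf_cont N.+1)).
exists (um%:M) => V; rewrite !L_eq mxE eqxx mulr1n.
set t := V i0 i0.
have [ht|ht] := boolP (t \in `[- Rb, Rb]); first exact: ummin.
have h0 : (0 : R) \in `[- Rb, Rb] by rewrite in_itv /= oppr_le0 !ltW.
apply: (le_trans (ummin _ h0)); rewrite Lf0.
have tb : Rb < `|t|.
  move: ht; rewrite in_itv /= negb_and -!ltNge ltr_normr => /orP[ht|ht].
    by apply/orP; right; rewrite ltrNr.
  by apply/orP; left.
have := @Lf_lower N.+1 t (ltn0Sn N); rewrite -/c => hl.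
apply: (le_trans ln2_le1); apply: (le_trans _ hl).
have : c * Rb = 2 by rewrite /Rb mulrC divfK ?gt_eqF.
have : c * Rb <= c * `|t| by rewrite ler_pM2l // ltW.
lra.
Qed.


Lemma zb_abs N (smp : {ffun 'I_N -> sampleT}) : (0 < N)%N -> `|zb smp| <= 1.
Proof.
move=> N0; rewrite /zb normrM ger0_norm ?invr_ge0 ?ler0n //.
rewrite ler_pdivrMl ?ltr0n // mulr1.
apply: (le_trans (ler_norm_sum _ _ _)).
rewrite (eq_bigr (fun _ => 1)); last by move=> l _; rewrite /lab; case: (smp l).2; rewrite ?normrN normr1.
by rewrite sumr_const card_ord.
Qed.

Lemma u_conv (Ustar : nat -> 'M[R]_d) :
  (forall N, is_minimizer P0 H0 N (Ustar N)) ->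
  forall eps : R, 0 < eps -> exists K : nat, forall N : nat, (K <= N)%N ->
    `|Ustar N i0 i0 - 3| <= eps.
Proof.
move=> hmin eps e0.
have Dp : 0 < Dinf (3 + eps) by apply: Dinf_pos; lra.
have Dm : Dinf (3 - eps) < 0 by apply: Dinf_neg; lra.
have q1 : 0 < Dinf (3 + eps) / 2 by lra.
have q2 : 0 < - Dinf (3 - eps) / 2 by lra.
have [K1 H1] := Dconv (3 + eps) _ q1.
have [K2 H2] := Dconv (3 - eps) _ q2.
exists (maxn K1 K2) => N KN.
have hK1 : (K1 <= N)%N := leq_trans (leq_maxl _ _) KN.
have hK2 : (K2 <= N)%N := leq_trans (leq_maxr _ _) KN.
have d1 := H1 N hK1; have d2 := H2 N hK2.
have p1 : 0 < Dn N (3 + eps).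
  move: d1; rewrite ler_norml => /andP[a b]; lra.
have p2 : Dn N (3 - eps) < 0.
  move: d2; rewrite ler_norml => /andP[a b]; lra.
set u := Ustar N i0 i0.
have m1 := hmin N ((3 + eps)%:M); have m2 := hmin N ((3 - eps)%:M).
rewrite !L_eq !mxE eqxx !mulr1n -/u in m1 m2.
have t1 := L_tangent N (3 + eps) u.
have t2 := L_tangent N (3 - eps) u.
rewrite ler_norml; apply/andP; split.
  rewrite lerNl opprB; rewrite leNgt; apply/negP => hu.
  have : 0 < (u - (3 - eps)) * Dn N (3 - eps) by rewrite nmulr_rgt0 // subr_lt0; lra.
  lra.
rewrite leNgt; apply/negP => hu.
have : 0 < (u - (3 + eps)) * Dn N (3 + eps) by rewrite mulr_gt0 // subr_gt0; lra.
lra.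
Qed.

End Model.

Theorem theorem2 (R : realType) (d : nat) (hd : (0 < d)%N) :
  exists (P H : fdist R 'rV[R]_d),
    (forall N : nat, exists U : 'M[R]_d, is_minimizer P H N U) /\
    exists theta_new : 'rV[R]_d, in_supp H theta_new /\
      forall Ustar : nat -> 'M[R]_d,
        (forall N : nat, is_minimizer P H N (Ustar N)) ->
        forall phiq : 'rV[R]_d, in_supp P phiq ->
          exists c : R, 0 < c /\
            (* d_TV(N,M) --> c in probability as N, M -> oo *)
            forall eps delta : R, 0 < eps -> 0 < delta ->
              exists K : nat, forall N M : nat, (K <= N)%N -> (K <= M)%N ->
                prob_samples P theta_new M
                  (fun smp => eps < `|dtv_new P theta_new (Ustar N) phiq smp - c|)
                <= delta.
Proof.
exists (P0 R d hd), (H0 R d hd); split; first exact: exists_min.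
exists (theta R d hd 1); split; first by exists ord0; split; [exact: w_gt0|].
move=> Ustar hmin phiq [i [_ <-]].
set m := mt R 1.
set c := `|sigmoid (m * 3) - sigmoid 1|.
have c0 : 0 < c.
  rewrite /c normr_gt0 subr_eq0; apply/negP => /eqP h.
  have := sig_lt R _ _ (mt1_gt R); rewrite mulrC -/m h ltxx //.
exists c; split => // eps dl e0 dl0.
have e2 : 0 < eps / 2 by rewrite divr_gt0.
have [K1 HK1] := @u_conv R d hd Ustar hmin _ e2.
have [K2 HK2] := @nat_big R (36 / (eps ^+ 2 * dl)).
exists (maxn K1 K2) => N M KN KM.
have hu := HK1 N (leq_trans (leq_maxl _ _) KN).
have hM := HK2 M (leq_trans (leq_maxr _ _) KM).
have q0 : 0 < 36 / (eps ^+ 2 * dl) by rewrite divr_gt0 // mulr_gt0 // exprn_gt0.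
have M0 : (0 < M)%N by rewrite -(ltr0n R); apply: lt_trans hM.
set u := Ustar N (i0 d hd) (i0 d hd) in hu.
set eta := eps ^+ 2 / 36.
have eta0 : 0 < eta by rewrite divr_gt0 // exprn_gt0.
rewrite /prob_samples.
have := @markovP R sampleT (pis R d hd 1) (pis_ge0 R d hd 1) M
  (fun smp => eps < `|dtv_new (P0 R d hd) (theta R d hd 1) (Ustar N) (phi R d hd) smp - c|)
  (fun smp => ((M%:R)^-1 * \sum_l lab R (smp l).2 - m) ^+ 2) eta eta0.
move=> h; refine (le_trans (h _ _) _).
- by move=> smp; exact: sqr_ge0.
- move=> smp hE.
  rewrite /dtv_new icl_eq dotv_theta /tv2 in hE.
  set z := zb R M smp in hE.
  have ez : zb R M smp = (M%:R)^-1 * \sum_l lab R (smp l).2 by [].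
  rewrite -ez -/z.
  have za : `|z| <= 1 by apply: zb_abs.
  set a := sigmoid (z * u) in hE.
  have e1 : 1 - a - (1 - sigmoid 1) = - (a - sigmoid 1) by ring.
  rewrite e1 normrN in hE.
  have e2b : 1 / 2 * (`|a - sigmoid 1| + `|a - sigmoid 1|) = `|a - sigmoid 1| by field.
  rewrite e2b in hE.
  have h1 := ler_dist_dist (a - sigmoid 1) (sigmoid (m * 3) - sigmoid 1).
  have e4 : a - sigmoid 1 - (sigmoid (m * 3) - sigmoid 1) = a - sigmoid (m * 3) by ring.
  rewrite e4 in h1.
  have h2 := sig_lip R (z * u) (m * 3).
  have e3 : z * u - m * 3 = z * (u - 3) + 3 * (z - m) by ring.
  rewrite e3 in h2.
  have h3 := ler_normD (z * (u - 3)) (3 * (z - m)).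
  have h4 : `|z * (u - 3)| <= eps / 2.
    rewrite normrM; apply: (le_trans (ler_wpM2r (normr_ge0 _) za)).
    by rewrite mul1r.
  have h5 : `|3 * (z - m)| = 3 * `|z - m| by rewrite normrM ger0_norm.
  have h6 : eps / 6 < `|z - m|.
    rewrite -/c in h1.
    have : eps < eps / 2 + 3 * `|z - m|.
      apply: (lt_le_trans hE); apply: (le_trans h1); rewrite /a.
      apply: (le_trans h2); apply: (le_trans h3); rewrite h5; lra.
    lra.
  have h7 : `|z - m| ^+ 2 = (z - m) ^+ 2 by rewrite real_normK ?num_real.
  rewrite -h7 /eta.
  have e6 : 0 < eps / 6 by rewrite divr_gt0.
  have : (eps / 6) ^+ 2 <= `|z - m| ^+ 2.
    by rewrite lerXn2r ?nnegrE ?normr_ge0 ?ltW.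
  have -> : (eps / 6) ^+ 2 = eps ^+ 2 / 36 by field.
  by [].
- have := @varP R sampleT (pis R d hd 1) (pis_sum R d hd 1) M (fun s => lab R s.2) m M0 (pis_mean R d hd 1).
  rewrite /= => ->.
  have hv := pis_var R d hd 1.
  have Mp : (0 : R) < M%:R by rewrite ltr0n.
  apply: (@le_trans _ _ (eta^-1 * (M%:R)^-1)).
    rewrite ler_wpM2l ?invr_ge0 ?(ltW eta0) //.
    by rewrite -[X in _ <= X]mulr1 ler_wpM2l ?invr_ge0 ?(ltW Mp).
  rewrite /eta.
  move: hM; rewrite ltr_pdivrMr ?mulr_gt0 ?exprn_gt0 // => hM.
  have -> : (eps ^+ 2 / 36)^-1 * (M%:R)^-1 = 36 / (eps ^+ 2 * M%:R).
    by field; rewrite !gt_eqF ?exprn_gt0.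
  rewrite ler_pdivrMr ?mulr_gt0 ?exprn_gt0 //.
  have -> : dl * (eps ^+ 2 * M%:R) = M%:R * (eps ^+ 2 * dl) by ring.
  exact: ltW.
Qed.
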